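(* Let $K$ be an algebraically closed field of characteristic zero, let $\Phi=(f_1,\dots,f_n)$ be a polynomial automorphism of $K^n$, let $\deg_1$ be the standard homogeneous degree on $K[x_1,\dots,x_n]$, let $d_i=\deg_1(f_i)$, and let $\deg_2$ be the weighted degree on $K[x_1,\dots,x_n]$ assigning weight $d_i$ to $x_i$. Let $I=\{P : P(\overline{f_1},\dots,\overline{f_n})=0\}$ be the ideal of relations, where $\overline{f_i}$ is the homogeneous component of $f_i$ of highest degree. If $I$ is principal, $I=(R)$, then $\deg_2(R)\le d_1+\dots+d_n-n+1$.
   Context: $\deg_2(0)=-\infty$. *)

(* Defs.v *)
From HB Require Import structures.
From mathcomp Require Import all_boot all_order all_algebra.
From mathcomp Require Import mpoly.
Set Implicit Arguments. Unset Strict Implicit. Unset Printing Implicit Defensive.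
Import Order.TTheory GRing.Theory Num.Theory.
Local Open Scope ring_scope.

Definition poly_automorphism (K : comRingType) (n : nat)
  (f : n.-tuple {mpoly K[n]}) : Prop :=
  exists g : n.-tuple {mpoly K[n]},
    forall i : 'I_n, (tnth f i) \mPo g = 'X_i /\ (tnth g i) \mPo f = 'X_i.

Definition deg1 (K : ringType) (n : nat) (p : {mpoly K[n]}) : nat := (msize p).-1.

Definition top_comp (K : ringType) (n : nat) (p : {mpoly K[n]}) : {mpoly K[n]} :=
  \sum_(m <- msupp p | mdeg m == deg1 p) p@_m *: 'X_[m].

(* weighted degree with weight w i for x_i (meaningful for p <> 0;
   deg_2(0) = -oo is handled by requiring p <> 0 where used) *)
Definition wdeg (K : ringType) (n : nat) (w : 'I_n -> nat) (p : {mpoly K[n]}) : nat :=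
  \max_(m <- msupp p) \sum_(i < n) (m i * w i)%N.

(* Main.v *)
Require Import Defs.
From HB Require Import structures.
From mathcomp Require Import all_boot all_order all_algebra.
From mathcomp Require Import mpoly.
From mathcomp Require Import zify ring lra.
Import Order.TTheory GRing.Theory Num.Theory.
Local Open Scope ring_scope.
Set Implicit Arguments. Unset Strict Implicit. Unset Printing Implicit Defensive.

Definition wmf (n : nat) (w : 'I_n -> nat) (m : 'X_{1..n}) : nat :=
  (\sum_(i < n) m i * w i)%N.

Fact wmf0 n w : @wmf n w 0%MM = 0%N.
Proof. by rewrite /wmf big1 // => i _; rewrite mnm0E. Qed.

Fact wmfD n w : {morph @wmf n w : m1 m2 / (m1 + m2)%MM >-> (m1 + m2)%N}.
Proof.
by move=> m1 m2; rewrite /wmf -big_split; apply: eq_bigr => i _; rewrite mnmDE mulnDl.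
Qed.

HB.instance Definition _ n w := isMeasure.Build n (@wmf n w) (@wmf0 n w) (@wmfD n w).

Lemma wmfU n w (i : 'I_n) : wmf w U_(i)%MM = w i.
Proof.
rewrite /wmf (bigD1 i) //= mnm1E eqxx mul1n big1 ?addn0 // => j ji.
by rewrite mnm1E eq_sym (negbTE ji).
Qed.



Lemma bigmax_seq_ex (T : eqType) (s : seq T) (F : T -> nat) :
  s != [::] -> exists2 x, x \in s & (\max_(y <- s) F y)%N = F x.
Proof.
elim: s => // a s IH _; rewrite big_cons.
case: (eqVneq s [::]) => [->|/IH [x xs ->]].
  by exists a; rewrite ?mem_head // big_nil maxn0.
case: (leqP (F a) (F x)) => h.
  by exists x; rewrite ?inE ?xs ?orbT // (maxn_idPr h).
by exists a; rewrite ?mem_head // (maxn_idPl (ltnW h)).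
Qed.

Lemma coef_neq0_size (R : nzSemiRingType) (p : {poly R}) j :
  p`_j != 0 -> (j < size p)%N.
Proof. by apply: contraR; rewrite -leqNgt => /leq_sizeP ->. Qed.

Section Psi.
Context (n : nat) (K : idomainType) (w : 'I_n -> nat).
Implicit Types (p q : {mpoly K[n]}).

Local Notation mf := (@wmf n w).

Definition psi p : {poly {mpoly K[n]}} :=
  mmap (polyC \o (@mpolyC n K)) (fun i => ('X_i)%:P * 'X^(w i)) p.

Lemma psiM p q : psi (p * q) = psi p * psi q.
Proof. exact: rmorphM. Qed.
Lemma psiD p q : psi (p + q) = psi p + psi q.
Proof. exact: rmorphD. Qed.
Lemma psiB p q : psi (p - q) = psi p - psi q.
Proof. exact: rmorphB. Qed.
Lemma psi0 : psi 0 = 0.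
Proof. exact: rmorph0. Qed.

Lemma psiE p : psi p = \sum_(m <- msupp p) (p@_m *: 'X_[m])%:P * 'X^(mf m).
Proof.
apply: eq_bigr => m _ /=; rewrite /mmap1.
under eq_bigr do rewrite exprMn -exprM.
rewrite big_split /= prodrXr.
under eq_bigr do rewrite -rmorphXn.
rewrite -rmorph_prod -mpolyXE_id mulrA -polyCM mul_mpolyC.
by congr (_ * 'X^_); apply: eq_bigr => i _; rewrite mulnC.
Qed.

Lemma mcoeff_pihomog d p m :
  (pihomog mf d p)@_m = if mf m == d then p@_m else 0.
Proof.
rewrite pihomogE raddf_sum /= big_mkcond /=.
case: (boolP (m \in msupp p)) => mp.
  rewrite (bigD1_seq m) //= ?msupp_uniq // big1 ?addr0.
    by rewrite mcoeffZ mcoeffX eqxx mulr1; case: (mf m == d).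
  move=> m' /negbTE mm; case: ifP => _ //.
  by rewrite mcoeffZ mcoeffX eq_sym mm mulr0 || by rewrite mcoeffZ mcoeffX mm mulr0.
rewrite big1; first by rewrite (memN_msupp_eq0 mp); case: ifP.
move=> m' _; case: ifP => _ //; rewrite mcoeffZ mcoeffX.
case: eqP => [em|]; last by rewrite mulr0.
by move: mp; rewrite em => /memN_msupp_eq0 ->; rewrite mul0r.
Qed.

Lemma coef_psi p k : (psi p)`_k = pihomog mf k p.
Proof.
rewrite psiE coef_sum pihomogE [RHS]big_mkcond /=; apply: eq_bigr => m _.
rewrite coefMXn coefC; case: (ltngtP k (mf m)) => [h|h|->].
- by [].
- by rewrite (_ : (k - mf m)%N == 0%N = false) //; apply/negbTE; rewrite subn_eq0 -ltnNge.
- by rewrite subnn eqxx.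
Qed.

Lemma wmf_lt p m : m \in msupp p -> (mf m < mmeasure mf p)%N.
Proof. exact: mmeasure_mnm_lt. Qed.

Lemma pihomog_big p d : (mmeasure mf p <= d)%N -> pihomog mf d p = 0.
Proof.
move=> h; apply/mpolyP => m; rewrite mcoeff_pihomog mcoeff0.
case: eqP => // e; case: (boolP (m \in msupp p)) => [/wmf_lt|/memN_msupp_eq0//].
by rewrite e ltnNge h.
Qed.

Lemma pihomog_top_neq0 p : p != 0 -> pihomog mf (mmeasure mf p).-1 p != 0.
Proof.
move=> p0; have : msupp p != [::] by rewrite msupp_eq0.
move=> /(bigmax_seq_ex (fun m => (mf m).+1)) [m mp e].
apply/eqP => /mpolyP /(_ m); rewrite mcoeff_pihomog mcoeff0.
rewrite -mmeasureE in e; rewrite e /= eqxx => /eqP; rewrite mcoeff_eq0 mp //.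
Qed.

Lemma size_psi p : size (psi p) = mmeasure mf p.
Proof.
case: (eqVneq p 0) => [->|p0]; first by rewrite psi0 size_poly0 mmeasure0.
apply/eqP; rewrite eqn_leq; apply/andP; split.
  by apply/leq_sizeP => j hj; rewrite coef_psi pihomog_big.
have := pihomog_top_neq0 p0; rewrite -coef_psi => h.
have := mpolySpred mf p0 => e; rewrite e; exact: (coef_neq0_size h).
Qed.

Lemma lead_psi p : lead_coef (psi p) = pihomog mf (mmeasure mf p).-1 p.
Proof. by rewrite lead_coefE size_psi coef_psi. Qed.

Lemma psi_eq0 p : (psi p == 0) = (p == 0).
Proof. by rewrite -size_poly_eq0 size_psi mmeasure_poly_eq0. Qed.

Lemma mmeasureM_w p q : p != 0 -> q != 0 ->
  mmeasure mf (p * q) = (mmeasure mf p + mmeasure mf q).-1.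
Proof.
by move=> p0 q0; rewrite -!size_psi psiM size_mul ?psi_eq0.
Qed.

Lemma topM_w p q :
  pihomog mf (mmeasure mf (p * q)).-1 (p * q) =
  pihomog mf (mmeasure mf p).-1 p * pihomog mf (mmeasure mf q).-1 q.
Proof. by rewrite -!lead_psi psiM lead_coefM. Qed.

End Psi.

Lemma size_step (R : nzRingType) (a a' b b' : {poly R}) (p q : nat) :
  (size (a - a')%R <= p)%N -> (size a <= p.+1)%N -> (size a' <= p.+1)%N ->
  (size (b - b')%R <= q)%N -> (size b <= q.+1)%N -> (size b' <= q.+1)%N ->
  [/\ (size (a * b - a' * b')%R <= p + q)%N, (size (a * b)%R <= (p + q).+1)%N
    & (size (a' * b')%R <= (p + q).+1)%N].
Proof.
move=> h1 h2 h3 h4 h5 h6.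
have E : a * b - a' * b' = (a - a') * b + a' * (b - b').
  by rewrite mulrBl mulrBr addrA subrK.
split.
- rewrite E (leq_trans (size_polyD _ _)) // geq_max; apply/andP; split.
    by apply: (leq_trans (size_polyMleq _ _)); lia.
  by apply: (leq_trans (size_polyMleq _ _)); lia.
- by apply: (leq_trans (size_polyMleq _ _)); lia.
- by apply: (leq_trans (size_polyMleq _ _)); lia.
Qed.

Lemma size_prod_diff (R : nzRingType) (I : Type) (r : seq I)
  (A B : I -> {poly R}) (D : I -> nat) :
  (forall i, [/\ (size (A i - B i)%R <= D i)%N, (size (A i) <= (D i).+1)%N
    & (size (B i) <= (D i).+1)%N]) ->
  [/\ (size (\prod_(i <- r) A i - \prod_(i <- r) B i)%R <= \sum_(i <- r) D i)%N,
      (size (\prod_(i <- r) A i)%R <= (\sum_(i <- r) D i).+1)%N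
    & (size (\prod_(i <- r) B i)%R <= (\sum_(i <- r) D i).+1)%N].
Proof.
move=> hD; elim: r => [|i r [IH1 IH2 IH3]].
  by rewrite !big_nil subrr size_poly0 size_poly1.
rewrite !big_cons; have [h1 h2 h3] := hD i.
exact: size_step.
Qed.

Lemma size_pow_diff (R : nzRingType) (a b : {poly R}) (D k : nat) :
  [/\ (size (a - b)%R <= D)%N, (size a <= D.+1)%N & (size b <= D.+1)%N] ->
  [/\ (size (a ^+ k - b ^+ k)%R <= k * D)%N, (size (a ^+ k)%R <= (k * D).+1)%N
    & (size (b ^+ k)%R <= (k * D).+1)%N].
Proof.
move=> [h1 h2 h3]; elim: k => [|k [IH1 IH2 IH3]].
  by rewrite !expr0 subrr size_poly0 size_poly1.
by rewrite !exprS mulSn; apply: size_step.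
Qed.

Section Deriv.
Context (n : nat) (K : idomainType) (w : 'I_n -> nat).
Implicit Types (p q : {mpoly K[n]}).
Local Notation mf := (@wmf n w).

Lemma pihomog_deriv i k p :
  pihomog mf k (p^`M(i)) = (pihomog mf (k + w i) p)^`M(i).
Proof.
apply/mpolyP => m; rewrite mcoeff_pihomog !mcoeff_mderiv mcoeff_pihomog.
by rewrite (wmfD w m U_(i)%MM) wmfU eqn_add2r; case: ifP => _; rewrite ?mul0rn.
Qed.

Lemma deriv_top i p : (pihomog mf (mmeasure mf p).-1 p)^`M(i) != 0 ->
  [/\ (w i <= (mmeasure mf p).-1)%N,
  mmeasure mf (p^`M(i)) = ((mmeasure mf p).-1 - w i).+1 &
  pihomog mf ((mmeasure mf p).-1 - w i) (p^`M(i)) =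
    (pihomog mf (mmeasure mf p).-1 p)^`M(i)].
Proof.
set W := (mmeasure mf p).-1; set q := pihomog _ _ p => q0.
have p0 : p != 0.
  by apply/eqP => p0; move: q0; rewrite /q p0 raddf0 mderiv0 eqxx.
have [m] : exists m, m \in msupp (q^`M(i)).
  move: q0; rewrite -msupp_eq0; case E: (msupp _) => [|m s] // _.
  by exists m; rewrite mem_head.
rewrite mcoeff_msupp mcoeff_mderiv /q mcoeff_pihomog.
case: (eqVneq (mf (m + U_(i)%MM)) W) => [eW _|_]; last by rewrite mul0rn eqxx.
have hW : (w i <= W)%N by rewrite -eW (wmfD w m U_(i)%MM) wmfU leq_addl.
have E : pihomog mf (W - w i) (p^`M(i)) = q^`M(i).
  by rewrite pihomog_deriv subnK.
split => //.
have eM : mmeasure mf p = W.+1 by rewrite /W -mpolySpred.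
rewrite -size_psi; apply/eqP; rewrite eqn_leq; apply/andP; split.
  apply/leq_sizeP => j hj; rewrite coef_psi pihomog_deriv pihomog_big ?mderiv0 //.
  by rewrite eM; lia.
by apply: coef_neq0_size; rewrite coef_psi E.
Qed.

End Deriv.

Lemma wmf1 n (m : 'X_{1..n}) : wmf (fun _ => 1%N) m = mdeg m.
Proof. by rewrite /wmf mdegE; apply: eq_bigr => i _; rewrite muln1. Qed.

Lemma mmeasure_1 n (K : nzRingType) (p : {mpoly K[n]}) :
  mmeasure (@wmf n (fun _ => 1%N)) p = msize p.
Proof. by rewrite !mmeasureE; apply: eq_bigr => m _; congr _.+1; exact: wmf1. Qed.

Lemma top_compE n (K : nzRingType) (p : {mpoly K[n]}) :
  top_comp p = pihomog (@wmf n (fun _ => 1%N)) (deg1 p) p.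
Proof. by rewrite /top_comp pihomogE; apply: eq_bigl => m; rewrite -(wmf1 m). Qed.

Section Comp.
Context (n : nat) (K : idomainType) (f : n.-tuple {mpoly K[n]}).
Implicit Types (H : {mpoly K[n]}).

Local Notation d := (fun i => deg1 (tnth f i)).
Local Notation F := [tuple top_comp (tnth f i) | i < n].
Local Notation psi1 := (@psi n K (fun _ => 1%N)).

Definition Psi' H : {poly {mpoly K[n]}} :=
  \sum_(m <- msupp H) ((H@_m)%:MP)%:P * \prod_(i < n) ((tnth F i)%:P * 'X^(d i)) ^+ (m i).

Lemma psi_big (w : 'I_n -> nat) (I : Type) (r : seq I) (G : I -> {mpoly K[n]}) :
  psi w (\sum_(i <- r) G i) = \sum_(i <- r) psi w (G i).
Proof. by rewrite /psi raddf_sum. Qed.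

Lemma psi_prod (w : 'I_n -> nat) (I : Type) (r : seq I) (G : I -> {mpoly K[n]}) :
  psi w (\prod_(i <- r) G i) = \prod_(i <- r) psi w (G i).
Proof. by rewrite /psi rmorph_prod. Qed.

Lemma psiC (w : 'I_n -> nat) (c : K) : psi w c%:MP = (c%:MP)%:P.
Proof. by rewrite /psi mmapC. Qed.

Lemma psiX (w : 'I_n -> nat) H k : psi w (H ^+ k) = (psi w H) ^+ k.
Proof. by rewrite /psi rmorphXn. Qed.

Lemma psi1_comp H : psi1 (H \mPo f) =
  \sum_(m <- msupp H) ((H@_m)%:MP)%:P * \prod_(i < n) (psi1 (tnth f i)) ^+ (m i).
Proof.
rewrite comp_mpolyE psi_big; apply: eq_bigr => m _.
by rewrite -mul_mpolyC psiM psiC psi_prod; under eq_bigr do rewrite psiX.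
Qed.

Lemma coef_Psi' H k : (Psi' H)`_k = pihomog (wmf d) k H \mPo F.
Proof.
rewrite /Psi' coef_sum pihomogE raddf_sum [RHS]big_mkcond /=; apply: eq_bigr => m _.
rewrite (_ : \prod_(i < n) _ = (\prod_(i < n) (tnth F i) ^+ (m i))%:P * 'X^(wmf d m)).
  rewrite mulrA -polyCM coefMXn coefC comp_mpolyZ comp_mpolyX mul_mpolyC.
  case: (ltngtP k (wmf d m)) => [h|h|->] //.
  - by rewrite (_ : (k - wmf d m)%N == 0%N = false) //; apply/negbTE; rewrite subn_eq0 -ltnNge.
  - by rewrite subnn eqxx.
under eq_bigr do rewrite exprMn -exprM.
rewrite big_split /= prodrXr.
under eq_bigr do rewrite -rmorphXn.
rewrite -rmorph_prod; congr (_ * 'X^_).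
by apply: eq_bigr => i _; rewrite mulnC.
Qed.

Lemma psi1_f i : [/\ (size (psi1 (tnth f i) - (tnth F i)%:P * 'X^(d i))%R <= d i)%N,
    (size (psi1 (tnth f i)) <= (d i).+1)%N
  & (size ((tnth F i)%:P * 'X^(d i))%R <= (d i).+1)%N].
Proof.
have h2 : (size (psi1 (tnth f i)) <= (d i).+1)%N.
  by rewrite size_psi mmeasure_1 /deg1 leqSpred.
have h3 : (size ((tnth F i)%:P * 'X^(d i))%R <= (d i).+1)%N.
  apply: (leq_trans (size_polyMleq _ _)); rewrite size_polyXn.
  by have := size_polyC_leq1 (tnth F i); lia.
split => //; apply/leq_sizeP => j hj.
rewrite coefB coefMXn coefC; case: (ltngtP j (d i)) => [h|h|->].
- by lia.
- rewrite (_ : (j - d i)%N == 0%N = false) ?subr0; last by apply/negbTE; rewrite subn_eq0 -ltnNge.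
  by apply/(leq_sizeP _ _ h2).
- by rewrite subnn eqxx coef_psi tnth_map tnth_ord_tuple top_compE subrr.
Qed.

Lemma size_diff H : (size (psi1 (H \mPo f) - Psi' H)%R <= (mmeasure (wmf d) H).-1)%N.
Proof.
rewrite psi1_comp /Psi' -sumrB big_seq.
apply: (big_ind (fun q : {poly {mpoly K[n]}} => (size q <= (mmeasure (wmf d) H).-1)%N)).
- by rewrite size_poly0.
- by move=> x y hx hy; apply: (leq_trans (size_polyD _ _)); rewrite geq_max hx hy.
move=> m mH; rewrite -mulrBr.
apply: (leq_trans (size_polyMleq _ _)).
have := @wmf_lt n K d H m mH.
have [h1 _ _] := size_prod_diff (index_enum 'I_n)
  (fun i => size_pow_diff (m i) (psi1_f i)).
have {}h1 : (size (\prod_(i < n) psi1 (tnth f i) ^+ m i -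
   \prod_(i < n) ((tnth F i)%:P * 'X^(deg1 (tnth f i))) ^+ m i)%R <=
     \sum_(i < n) m i * deg1 (tnth f i))%N := h1.
have := size_polyC_leq1 ((H@_m)%:MP_[n] : {mpoly K[n]}).
move=> hC hM; set a := size _ in hC *. set b := size _ in h1 *. set M := mmeasure _ _ in hM *. move: hC h1 hM. set S := (\sum_(i < n) _)%N. have -> : wmf d m = S by [].
by lia.
Qed.

Lemma comp_top H :
  (psi1 (H \mPo f))`_((mmeasure (wmf d) H).-1) =
    pihomog (wmf d) (mmeasure (wmf d) H).-1 H \mPo F.
Proof.
rewrite -coef_Psi' -[psi1 (H \mPo f)](subrK (Psi' H)) coefD.
have := size_diff H; move/leq_sizeP => h; by rewrite h // add0r.
Qed.

Lemma comp_top_size H :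
  pihomog (wmf d) (mmeasure (wmf d) H).-1 H \mPo F != 0 ->
  ((mmeasure (wmf d) H).-1 < msize (H \mPo f))%N.
Proof.
move=> h; have -> : msize (H \mPo f) = size (psi1 (H \mPo f)) by rewrite size_psi mmeasure_1.
apply: coef_neq0_size; by rewrite comp_top.
Qed.

End Comp.

Section Chain.
Context (n k : nat) (K : comNzRingType) (f : n.-tuple {mpoly K[k]}).
Implicit Types (P Q : {mpoly K[n]}).

Definition Ch P := forall l : 'I_k,
  (P \mPo f)^`M(l) = \sum_(j < n) (P^`M(j) \mPo f) * (tnth f j)^`M(l).

Lemma ChD P Q : Ch P -> Ch Q -> Ch (P + Q).
Proof.
move=> hP hQ l; rewrite raddfD mderivD hP hQ -big_split /=.
by apply: eq_bigr => j _; rewrite mderivD raddfD mulrDl.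
Qed.

Lemma ChZ c P : Ch P -> Ch (c *: P).
Proof.
move=> hP l; rewrite comp_mpolyZ mderivZ hP scaler_sumr; apply: eq_bigr => j _.
by rewrite mderivZ comp_mpolyZ scalerAl.
Qed.

Lemma ChC c : Ch c%:MP.
Proof.
move=> l; rewrite comp_mpolyC mderivC big1 // => j _.
by rewrite mderivC comp_mpoly0 mul0r.
Qed.

Lemma Ch0 : Ch 0.
Proof. by have := ChC 0; rewrite mpolyC0. Qed.

Lemma Ch1 : Ch 1.
Proof. by have := ChC 1; rewrite mpolyC1. Qed.

Lemma ChM P Q : Ch P -> Ch Q -> Ch (P * Q).
Proof.
move=> hP hQ l; rewrite rmorphM mderivM hP hQ mulr_suml mulr_sumr -big_split /=.
apply: eq_bigr => j _; rewrite mderivM rmorphD !rmorphM /=.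
by ring.
Qed.

Lemma ChX (i : 'I_n) : Ch 'X_i.
Proof.
move=> l; rewrite comp_mpolyXU (bigD1 i) //= big1 ?addr0.
  rewrite mderivX mnm1E eqxx.
  have -> : (U_(i) - U_(i))%MM = 0%MM :> 'X_{1..n}.
    by apply/mnmP => j; rewrite mnmBE mnm0E subnn.
  rewrite mpolyX0 comp_mpolyZ comp_mpoly1.
  by rewrite -tnth_nth /= scale1r mul1r.
move=> j ji; rewrite mderivX mnm1E eq_sym (negbTE ji) scale0r comp_mpoly0.
by rewrite mul0r.
Qed.

Lemma Ch_all P : Ch P.
Proof.
rewrite [P]mpolyE; apply: (big_ind Ch Ch0 ChD) => m _; apply: ChZ.
rewrite mpolyXE_id; apply: (big_ind Ch Ch1 ChM) => i _.
elim: (m i) => [|e IH]; first by rewrite expr0; exact: Ch1.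
by rewrite exprS; apply: ChM => //; exact: ChX.
Qed.

End Chain.

Section Jac.
Context (n : nat) (K : idomainType).
Implicit Types (P : {mpoly K[n]}) (f : n.-tuple {mpoly K[n]}).

Definition Jac f : 'M[{mpoly K[n]}]_n := \matrix_(j, l) (tnth f j)^`M(l).
Definition grad P f : 'rV[{mpoly K[n]}]_n := \row_j (P^`M(j) \mPo f).

Lemma grad_Jac P f : grad P f *m Jac f = \row_l (P \mPo f)^`M(l).
Proof.
apply/rowP => l; rewrite !mxE Ch_all; apply: eq_bigr => j _; by rewrite !mxE.
Qed.

Lemma det_Jac_neq0 f (g : n.-tuple {mpoly K[n]}) :
  (forall k, tnth g k \mPo f = 'X_k) -> \det (Jac f) != 0.
Proof.
move=> hg; pose A : 'M[{mpoly K[n]}]_n := \matrix_(k, j) ((tnth g k)^`M(j) \mPo f).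
have AJ : A *m Jac f = 1%:M.
  apply/matrixP => k l; rewrite !mxE.
  rewrite (eq_bigr (fun j => ((tnth g k)^`M(j) \mPo f) * (tnth f j)^`M(l))); last first.
    by move=> j _; rewrite !mxE.
  rewrite -Ch_all hg mderivX mnm1E; case: eqP => [->|_]; last by rewrite scale0r.
  have -> : (U_(l) - U_(l))%MM = 0%MM :> 'X_{1..n}.
    by apply/mnmP => j; rewrite mnmBE mnm0E subnn.
  by rewrite mpolyX0 scale1r.
apply/eqP => h; have := congr1 determinant AJ.
by rewrite det_mulmx h mulr0 det1 => /eqP; rewrite eq_sym oner_eq0.
Qed.

Lemma msize_mderiv P i : (msize (P^`M(i)) <= (msize P).-1)%N.
Proof.
rewrite msizeE; apply/bigmax_leqP_seq => m; rewrite mcoeff_msupp mcoeff_mderiv => h _.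
have : P@_(m + U_(i)) != 0 by apply: contraNneq h => ->; rewrite mul0rn.
rewrite -mcoeff_msupp => /msize_mdeg_lt; rewrite mdegD mdeg1 addn1.
by case: (msize P).
Qed.

Lemma msizeM_le' (p q : {mpoly K[n]}) : (msize (p * q) <= (msize p + msize q).-1)%N.
Proof.
case: (eqVneq p 0) => [->|p0]; first by rewrite mul0r msize0.
case: (eqVneq q 0) => [->|q0]; first by rewrite mulr0 msize0.
by rewrite msizeM.
Qed.

Lemma msize_prod (I : Type) (r : seq I) (G : I -> {mpoly K[n]}) (e : I -> nat) :
  (forall i, msize (G i) <= (e i).+1)%N ->
  (msize (\prod_(i <- r) G i) <= (\sum_(i <- r) e i).+1)%N.
Proof.
move=> hG; elim: r => [|a r IH]; first by rewrite !big_nil msize1.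
rewrite !big_cons; apply: (leq_trans (msizeM_le' _ _)).
by have := hG a; lia.
Qed.

Lemma msize_sign (k : nat) (x : {mpoly K[n]}) : msize ((-1) ^+ k * x) = msize x.
Proof. by rewrite -signr_odd; case: (odd k); rewrite ?expr1 ?expr0 ?mulN1r ?mul1r ?msizeN. Qed.

Lemma msize_det m (B : 'M[{mpoly K[n]}]_m) (e : 'I_m -> nat) :
  (forall r c, msize (B r c) <= (e r).+1)%N ->
  (msize (\det B) <= (\sum_r e r).+1)%N.
Proof.
move=> hB; rewrite /determinant; apply: (leq_trans (msize_sum _ _ _)).
apply/bigmax_leqP => s _; rewrite msize_sign.
by apply: msize_prod => r; apply: hB.
Qed.

End Jac.

Section Bound.
Context (n : nat) (K : idomainType) (f : n.-tuple {mpoly K[n]}).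
Hypothesis hd : forall j, (1 <= deg1 (tnth f j))%N.
Hypothesis hJ : \det (Jac f) != 0.

Lemma adj_bound (i l : 'I_n) :
  (msize (\adj (Jac f) l i) <= (\sum_(r < n.-1) (deg1 (tnth f (lift i r))).-1).+1)%N.
Proof.
rewrite mxE /cofactor msize_sign; apply: msize_det => r c.
rewrite !mxE; apply: (leq_trans (msize_mderiv _ _)).
by have := hd (lift i r); rewrite /deg1; case: (mmeasure _ _) => [|[|x]].
Qed.

Lemma deriv_comp_bound (P : {mpoly K[n]}) (i : 'I_n) :
  P^`M(i) \mPo f != 0 ->
  (msize (P^`M(i) \mPo f) + deg1 (tnth f i) + n <=
     msize (P \mPo f) + \sum_j deg1 (tnth f j))%N.
Proof.
move=> v0; set h := P \mPo f.
have E : \det (Jac f) * (P^`M(i) \mPo f) =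
         \sum_l h^`M(l) * \adj (Jac f) l i.
  have := congr1 (fun M => M *m \adj (Jac f)) (grad_Jac P f).
  rewrite /= -mulmxA mul_mx_adj mul_mx_scalar => /(congr1 (fun M : 'rV[{mpoly K[n]}]_n => M 0 i)).
  by rewrite !mxE => ->; apply: eq_bigr => l _; rewrite mxE.
set S := (\sum_(r < n.-1) (deg1 (tnth f (lift i r))).-1)%N.
have h1 : (msize (P^`M(i) \mPo f) <= msize (\det (Jac f) * (P^`M(i) \mPo f)))%N.
  rewrite msizeM //; have : msize (\det (Jac f)) != 0%N by rewrite msize_poly_eq0.
  by lia.
have h2 : (msize (\sum_l h^`M(l) * \adj (Jac f) l i) <= (msize h).-1 + S)%N.
  apply: (leq_trans (msize_sum _ _ _)); apply/bigmax_leqP => l _.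
  apply: (leq_trans (msizeM_le' _ _)).
  have := msize_mderiv h l; have := adj_bound i l; rewrite -/S; lia.
have hh : msize h != 0%N.
  rewrite msize_poly_eq0; apply/eqP => h0; move: v0; rewrite -(mulrI_eq0 _ (lregP hJ)) E.
  by rewrite big1 ?eqxx // => l _; rewrite h0 mderiv0 mul0r.
have e1 : (\sum_j deg1 (tnth f j) = deg1 (tnth f i) + \sum_(r < n.-1) deg1 (tnth f (lift i r)))%N.
  by rewrite (bigD1_ord i) //.
have e2 : (\sum_(r < n.-1) deg1 (tnth f (lift i r)) = S + n.-1)%N.
  rewrite /S -[X in (_ + X)%N]card_ord -sum1_card -big_split /=.
  by apply: eq_bigr => r _; have := hd (lift i r); lia.
have ni : (0 < n)%N by case: n i {e1 e2 S h1 h2 E v0 hh h} => // [[]].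
rewrite e1 e2; move: h1 h2; rewrite E; lia.
Qed.

End Bound.

Lemma wdegE n (K : nzRingType) (w : 'I_n -> nat) (p : {mpoly K[n]}) :
  wdeg w p = (mmeasure (wmf w) p).-1.
Proof.
rewrite /wdeg mmeasureE; elim: (msupp p) => [|a s IH]; first by rewrite !big_nil.
rewrite !big_cons IH; move: (\max_(_ <- s) _)%N => b.
have -> : (\sum_(i < n) a i * w i)%N = wmf w a by [].
by case: b => [|b] /=; lia.
Qed.

Lemma homog_measure n (K : nzRingType) (w : 'I_n -> nat) (p : {mpoly K[n]}) W :
  pihomog (wmf w) W p != 0 -> mmeasure (wmf w) (pihomog (wmf w) W p) = W.+1.
Proof.
move=> q0; have h1 := pihomogP (wmf w) W p.
have h2 := dhomog_msize h1.
by rewrite (mpolySpred _ q0) (dhomog_uniq q0 h2 h1).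
Qed.

Lemma mderivXn n (K : comNzRingType) (p : {mpoly K[n]}) i k :
  (p ^+ k.+1)^`M(i) = k.+1%:R * p ^+ k * p^`M(i).
Proof.
elim: k => [|k IH]; first by rewrite expr1 expr0 mulr1 mul1r.
rewrite exprS mderivM IH exprS.
rewrite -[k.+2]addn1 -[k.+1]addn1 !natrD; ring.
Qed.

Lemma comp_mpoly_assoc n k l (K : comNzRingType) (P : {mpoly K[n]})
  (f : n.-tuple {mpoly K[k]}) (g : k.-tuple {mpoly K[l]}) :
  (P \mPo f) \mPo g = P \mPo [tuple (tnth f i \mPo g) | i < n].
Proof.
rewrite [P \mPo f]comp_mpolyE [RHS]comp_mpolyE (big_morph (comp_mpoly g) (comp_mpolyD g) (comp_mpoly0 g)); apply: eq_bigr => m _.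
rewrite comp_mpolyZ rmorph_prod; congr (_ *: _); apply: eq_bigr => i _.
by rewrite rmorphXn tnth_map tnth_ord_tuple.
Qed.

Lemma mmeasure_pow n (K : idomainType) (w : 'I_n -> nat) (p : {mpoly K[n]}) k :
  p != 0 -> mmeasure (wmf w) (p ^+ k) = (k * (mmeasure (wmf w) p).-1).+1.
Proof.
move=> p0; elim: k => [|k IH]; first by rewrite expr0 mmeasure1.
rewrite exprS mmeasureM_w ?expf_neq0 // IH.
have := mpolySpred (wmf w) p0; lia.
Qed.

Section Main.
Context (n : nat) (K : idomainType) (f g : n.-tuple {mpoly K[n]}) (R : {mpoly K[n]}).
Hypothesis hch : [pchar K] =i pred0.
Hypothesis hfg : forall i, tnth f i \mPo g = 'X_i.
Hypothesis hgf : forall i, tnth g i \mPo f = 'X_i.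
Local Notation F := [tuple top_comp (tnth f i) | i < n].
Hypothesis hI : forall P, P \mPo F = 0 <-> exists Q, P = R * Q.
Hypothesis R0 : R != 0.
Local Notation d := (fun i => deg1 (tnth f i)).
Local Notation mf := (wmf d).
Local Notation S := (\sum_(i < n) deg1 (tnth f i))%N.

Lemma comp_inj P : P \mPo f = 0 -> P = 0.
Proof.
move=> h; rewrite -(comp_mpoly_id P).
have -> : [tuple 'X_i | i < n] = [tuple (tnth f i \mPo g) | i < n] :> n.-tuple {mpoly K[n]}.
  by apply: eq_from_tnth => i; rewrite !tnth_map !tnth_ord_tuple hfg.
by rewrite -comp_mpoly_assoc h comp_mpoly0.
Qed.

Lemma hd i : (1 <= deg1 (tnth f i))%N.
Proof.
rewrite /deg1; case: (leqP (msize (tnth f i)) 1) => [h|]; last by case: (msize _) => [|[]].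
have := hfg i; rewrite (msize1_polyC h) comp_mpolyC => /(congr1 (fun p => msize p)).
by rewrite msizeC msizeX mdeg1; case: (_ != 0).
Qed.

Lemma hJ : \det (Jac f) != 0.
Proof. exact: (det_Jac_neq0 hgf). Qed.

Lemma RF : R \mPo F = 0.
Proof. by apply/hI; exists 1; rewrite mulr1. Qed.

Lemma R_nonconst : (1 < msize R)%N.
Proof.
rewrite ltnNge; apply/negP => h; move: R0 RF; rewrite (msize1_polyC h) comp_mpolyC.
by rewrite mpolyC_eq0 => /negbTE h1 /eqP; rewrite mpolyC_eq0 h1.
Qed.

Lemma meas_deriv_lt (p : {mpoly K[n]}) i :
  p^`M(i) != 0 -> (mmeasure mf (p^`M(i)) < mmeasure mf p)%N.
Proof.
move=> h; have p0 : p != 0 by apply: contraNneq h => ->; rewrite mderiv0.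
rewrite (mpolySpred mf p0) ltnS mmeasureE; apply/bigmax_leqP_seq => m.
rewrite mcoeff_msupp mcoeff_mderiv => hm _.
have : p@_(m + U_(i)) != 0 by apply: contraNneq hm => ->; rewrite mul0rn.
rewrite -mcoeff_msupp => /(@wmf_lt n K d p).
rewrite (wmfD d m U_(i)%MM) wmfU; rewrite /reverse_coercion /=; have := hd i; lia.
Qed.

Lemma exists_i0 : exists i, R^`M(i) \mPo F != 0.
Proof.
have [i Ri] : exists i, R^`M(i) != 0.
  have : msupp R != [::] by rewrite msupp_eq0.
  have [m mR hm] : exists2 m, m \in msupp R & m != 0%MM.
    apply/hasP; apply/negPn/negP => /hasPn hall; move: R_nonconst.
    rewrite msizeE; apply/negP; rewrite -leqNgt; apply/bigmax_leqP_seq => m mR _.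
    by have := hall m mR; rewrite negbK => /eqP ->; rewrite mdeg0.
  have [i hi] : exists i, m i != 0%N.
    apply/existsP; apply: contraR hm => /existsPn h; apply/eqP/mnmP => i.
    by rewrite mnm0E; apply/eqP/negPn/h.
  exists i; apply/eqP => /mpolyP /(_ (m - U_(i))%MM).
  rewrite mcoeff_mderiv submK ?lep1mP // mcoeff0 => /eqP.
  rewrite -mulr_natr mulf_eq0 (pcharf0P K).1 //.
  by rewrite mcoeff_eq0 mR.
exists i; apply/negP => /eqP /hI [Q EQ].
have Q0 : Q != 0 by apply: contraNneq Ri => Q0; rewrite EQ Q0 mulr0.
have := meas_deriv_lt Ri; rewrite EQ mmeasureM_w //.
by rewrite -(mmeasure_poly_eq0 mf) in Q0; lia.
Qed.

Lemma decomp T : T != 0 -> exists m Q, T = R ^+ m * Q /\ Q \mPo F != 0.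
Proof.
elim: {T}(msize T) {-2}T (leqnn (msize T)) => [|N IH] T hT T0.
  by move: T0; rewrite -msize_poly_eq0; move: hT; case: (msize T).
case: (eqVneq (T \mPo F) 0) => [/hI [Q1 EQ]|TF]; last by exists 0%N, T; rewrite expr0 mul1r.
have Q10 : Q1 != 0 by apply: contraNneq T0 => Q0; rewrite EQ Q0 mulr0.
have : (msize Q1 <= N)%N.
  move: hT; rewrite EQ msizeM //; have := R_nonconst; lia.
move=> /IH /(_ Q10) [m [Q [E1 E2]]].
by exists m.+1, Q; rewrite EQ E1 exprS mulrA.
Qed.

Lemma claim i0 (hi0 : R^`M(i0) \mPo F != 0) m : forall P Q,
  pihomog mf (mmeasure mf P).-1 P = R ^+ m * Q -> Q \mPo F != 0 ->
  ((mmeasure mf P).-1 + 1 + m * n <= msize (P \mPo f) + m * S)%N.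
Proof.
elim: m => [|m IH] P Q hP hQ.
  rewrite expr0 mul1r in hP.
  have := @comp_top_size n K f P; rewrite hP => /(_ hQ); by rewrite !mul0n !addn0 addn1.
set Q1 := m.+1%:R * R^`M(i0) * Q + R * Q^`M(i0).
have hD : (pihomog mf (mmeasure mf P).-1 P)^`M(i0) = R ^+ m * Q1.
  rewrite hP mderivM mderivXn /Q1. rewrite exprS; ring.
have Q1F : Q1 \mPo F != 0.
  rewrite /Q1 rmorphD !rmorphM /= RF mul0r addr0 !mulf_neq0 //.
  by rewrite rmorph_nat -mpolyC_nat mpolyC_eq0 (pcharf0P K).1.
have Q10 : Q1 != 0 by apply: contraNneq Q1F => ->; rewrite comp_mpoly0.
have hD0 : (pihomog mf (mmeasure mf P).-1 P)^`M(i0) != 0.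
  by rewrite hD mulf_neq0 ?expf_neq0.
have [hW eM eT] := @deriv_top n K d i0 P hD0.
have hP1 : pihomog mf (mmeasure mf (P^`M(i0))).-1 (P^`M(i0)) = R ^+ m * Q1.
  by rewrite eM /= eT hD.
have IH1 := IH _ _ hP1 Q1F.
have P10 : P^`M(i0) \mPo f != 0.
  apply/negP => /eqP /comp_inj P0; move: eM; rewrite P0 mmeasure0 //.
have B := @deriv_comp_bound n K f hd hJ P i0 P10.
rewrite eM /= in IH1; have eS : (\sum_j deg1 (tnth f j))%N = S by []. rewrite eS in B. rewrite !mulSn. move: hW IH1 B. move: (mmeasure mf P) => a. move: (mmeasure mdeg (P \mPo f)) => b. move: (mmeasure mdeg (P^`M(i0) \mPo f)) => c. move: (deg1 (tnth f i0)) S => e s. move: (m * n)%N (m * s)%N => x y. lia.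
Qed.

Lemma final : ((mmeasure mf R).-1 + n <= S + 1)%N.
Proof.
have [i0 hi0] := exists_i0.
pose T k := pihomog mf (mmeasure mf (tnth g k)).-1 (tnth g k).
have g0 k : tnth g k != 0.
  apply/negP => /eqP g0; have := hgf k; rewrite g0 comp_mpoly0 => /(congr1 (fun p => msize p)).
  by rewrite msize0 msizeX.
case: (boolP [forall k, T k \mPo F != 0]) => [/forallP allk | /forallPn [k /negPn /eqP Tk]].
  have hT : forall k, tnth [tuple T k | k < n] k \mPo F = 'X_k.
    move=> k; rewrite tnth_map tnth_ord_tuple.
    have := @comp_top n K f (tnth g k); rewrite hgf coef_psi pihomogX.
    case: eqP => [_ ->|_ h] //; move: (allk k); by rewrite /T -h eqxx.
  have hJF := det_Jac_neq0 hT.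
  have := grad_Jac R F; rewrite RF.
  move/(congr1 (fun M => M *m \adj (Jac F))).
  rewrite -mulmxA mul_mx_adj mul_mx_scalar => /(congr1 (fun M : 'rV[{mpoly K[n]}]_n => M 0 i0)).
  rewrite !mxE big1 => [/eqP|l _]; last by rewrite mxE mderiv0 mul0r.
  by rewrite mulf_eq0 (negbTE hJF) (negbTE hi0).
have T0 : T k != 0 by apply: pihomog_top_neq0.
have [m [Q [EQ QF]]] := decomp T0.
have Q0 : Q != 0 by apply: contraNneq QF => ->; rewrite comp_mpoly0.
have m0 : m != 0%N by apply: contraNneq QF => m0; rewrite -Tk EQ m0 expr0 mul1r.
have C := claim hi0 EQ QF.
rewrite hgf msizeX mdeg1 in C.
have eT : mmeasure mf (T k) = (mmeasure mf (tnth g k)).-1.+1 by rewrite homog_measure.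
move: eT; rewrite EQ mmeasureM_w ?expf_neq0 // mmeasure_pow //.
have := mpolySpred mf Q0; have := mpolySpred mf R0.
move: (mmeasure mf R) (mmeasure mf Q) (mmeasure mf (tnth g k)) C => a b c C ea eb E.
rewrite leqNgt; apply/negP => hlt.
have := leq_mul (leqnn m) hlt; rewrite mulnDr addn1 !mulnS => H.
move: m0 C E H; move: a.-1 b.-1 c.-1 ea eb => a' b' c' ea eb.
move: (m * S)%N (m * a')%N (m * n)%N => y1 y2 y3.
rewrite eb; lia.
Qed.

End Main.

Unset Implicit Arguments.
Set Strict Implicit.

Theorem theorem2 (K : closedFieldType) (n : nat) (f : n.-tuple {mpoly K[n]})
  (R : {mpoly K[n]}) :
  [pchar K] =i pred0 ->
  poly_automorphism f ->
  (forall P : {mpoly K[n]},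
     P \mPo [tuple top_comp (tnth f i) | i < n] = 0 <->
     exists Q : {mpoly K[n]}, P = R * Q) ->
  R != 0 ->
  (wdeg (fun i => deg1 (tnth f i)) R : int)
    <= (\sum_(i < n) deg1 (tnth f i))%N%:Z - n%:Z + 1.
Proof.
move=> hch [g hg] hI R0.
have hfg i : tnth f i \mPo g = 'X_i by case: (hg i).
have hgf i : tnth g i \mPo f = 'X_i by case: (hg i).
have := @final n K f g R hch hfg hgf hI R0.
rewrite wdegE; move: (_.-1) (\sum_(i < n) _)%N => a b h.
lia.
Qed.
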